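(* Let $\mathcal{X}$ be a Hilbert module over a pro-$C^*$-algebra $\mathcal{A}$, let $K\in Hom^*_{\mathcal{A}}(\mathcal{X})$, and let $\{\xi_i\}_{i\in I}$ and $\{\eta_i\}_{i\in I}$ be Parseval $K$-frames for $\mathcal{X}$ with synthesis operators $L_1,L_2:\mathcal{H}_{\mathcal{A}}\to\mathcal{X}$ (so $L_1e_i=\xi_i$, $L_2e_i=\eta_i$ for the standard orthonormal basis $\{e_i\}$ of $\mathcal{H}_{\mathcal{A}}$). If $L_1L_2^*=0$, then $\{\xi_i+\eta_i\}_{i\in I}$ is a $2$-tight $K$-frame for $\mathcal{X}$, i.e. $\sum_{i\in I}\langle\xi,\xi_i+\eta_i\rangle\langle\xi_i+\eta_i,\xi\rangle=2\langle K^*\xi,K^*\xi\rangle$ for all $\xi\in\mathcal{X}$.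
   Context: A pro-$C^*$-algebra $\mathcal{A}$ is a complete Hausdorff topological $*$-algebra whose topology is given by its continuous $C^*$-seminorms. A Hilbert $\mathcal{A}$-module $\mathcal{X}$ is a left $\mathcal{A}$-module with a complete $\mathcal{A}$-valued inner product. $Hom^*_{\mathcal{A}}(\mathcal{X})$ denotes adjointable bounded $\mathcal{A}$-module maps. $\mathcal{H}_{\mathcal{A}}$ is the Hilbert $\mathcal{A}$-module of sequences $(a_i)$ in $\mathcal{A}$ with $\sum_i a_i^*a_i$ convergent, inner product $\langle (a_i),(b_i)\rangle=\sum_ia_ib_i^*$; $e_i$ has $1_{\mathcal{A}}$ in position $i$, $0$ elsewhere; the synthesis operator of $\{\xi_i\}$ is $(c_i)\mapsto\sum_ic_i\xi_i$. A sequence $\{\xi_i\}_{i\in I}$ ($I$ countable) is a Parseval $K$-frame if $\sum_i\langle\xi,\xi_i\rangle\langle\xi_i,\xi\rangle=\langle K^*\xi,K^*\xi\rangle$ for all $\xi\in\mathcal{X}$ (series convergent in $\mathcal{A}$); it is $A$-tight if $\sum_i\langle\xi,\xi_i\rangle\langle\xi_i,\xi\rangle=A\langle K^*\xi,K^*\xi\rangle$ for all $\xi$. *)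

(* Defs.v *)
From HB Require Import structures.
From mathcomp Require Import all_boot all_order all_algebra.
From mathcomp Require Import complex.
From mathcomp Require Import reals.
Set Implicit Arguments. Unset Strict Implicit. Unset Printing Implicit Defensive.
Import Order.TTheory GRing.Theory Num.Theory.
Local Open Scope ring_scope.

(* [q] is a family of nonnegative functionals on a zmodule T ("seminorms" of the topology). *)
Definition directed (D : Type) (le : D -> D -> Prop) : Prop :=
  inhabited D /\ (forall d, le d d) /\
  (forall d1 d2 d3, le d1 d2 -> le d2 d3 -> le d1 d3) /\
  (forall d1 d2, exists d3, le d1 d3 /\ le d2 d3).

Definition net_cauchy (R : realType) (T : zmodType) (q : (T -> R) -> Prop)
  (D : Type) (le : D -> D -> Prop) (u : D -> T) : Prop :=
  forall p, q p -> forall e : R, 0 < e ->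
    exists d0, forall d1 d2, le d0 d1 -> le d0 d2 -> p (u d1 - u d2) < e.

Definition net_converges (R : realType) (T : zmodType) (q : (T -> R) -> Prop)
  (D : Type) (le : D -> D -> Prop) (u : D -> T) (t : T) : Prop :=
  forall p, q p -> forall e : R, 0 < e ->
    exists d0, forall d, le d0 d -> p (u d - t) < e.

Definition complete_wrt (R : realType) (T : zmodType) (q : (T -> R) -> Prop) : Prop :=
  forall (D : Type) (le : D -> D -> Prop) (u : D -> T),
    directed le -> net_cauchy q le u -> exists t, net_converges q le u t.

Definition series_converges (R : realType) (T : zmodType) (q : (T -> R) -> Prop)
  (u : nat -> T) (s : T) : Prop :=
  forall p, q p -> forall e : R, 0 < e ->
    exists N, forall n, (N <= n)%N -> p (\sum_(i < n) u i - s) < e.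

Record is_C_star_seminorm (R : realType) (A : algType R[i]) (star : A -> A) (p : A -> R) : Prop := {
  csn_ge0 : forall a, 0 <= p a;
  csn_triangle : forall a b, p (a + b) <= p a + p b;
  csn_homog : forall (c : R[i]) a, p (c *: a) = Normc.normc c * p a;
  csn_submult : forall a b, p (a * b) <= p a * p b;
  csn_cstar : forall a, p (star a * a) = p a ^+ 2
}.

Record is_pro_C_star_algebra (R : realType) (A : algType R[i]) (star : A -> A)
    (S : (A -> R) -> Prop) : Prop := {
  star_add : forall a b, star (a + b) = star a + star b;
  star_scale : forall (c : R[i]) a, star (c *: a) = (conjc c) *: star a;
  star_mul : forall a b, star (a * b) = star b * star a;
  star_invol : forall a, star (star a) = a;
  seminorms_cstar : forall p, S p -> is_C_star_seminorm star p;
  pro_hausdorff : forall a, (forall p, S p -> p a = 0) -> a = 0;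
  pro_complete : complete_wrt S
}.

Definition hm_seminorms (R : realType) (A : algType R[i]) (X : lmodType A)
  (S : (A -> R) -> Prop) (ip : X -> X -> A) : (X -> R) -> Prop :=
  fun q => exists2 p, S p & q = (fun x => Num.sqrt (p (ip x x))).

Record is_hilbert_module (R : realType) (A : algType R[i]) (star : A -> A)
    (S : (A -> R) -> Prop) (X : lmodType A) (ip : X -> X -> A) : Prop := {
  ip_linear : forall (a : A) (x y z : X), ip (a *: x + y) z = a * ip x z + ip y z;
  ip_star : forall x y, ip y x = star (ip x y);
  ip_pos : forall x, exists b : A, ip x x = star b * b;
  ip_definite : forall x, ip x x = 0 -> x = 0;
  hm_complete : complete_wrt (hm_seminorms S ip)
}.

Definition is_adjointable_hom (R : realType) (A : algType R[i])
    (S : (A -> R) -> Prop) (X : lmodType A) (ip : X -> X -> A)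
    (K Kstar : X -> X) : Prop :=
  (forall (a : A) x y, K (a *: x + y) = a *: K x + K y) /\
  (forall p, S p -> exists M : R, forall x, p (ip (K x) (K x)) <= M * p (ip x x)) /\
  (forall x y, ip (K x) y = ip x (Kstar y)).

Definition in_HA (R : realType) (A : algType R[i]) (star : A -> A)
    (S : (A -> R) -> Prop) (c : nat -> A) : Prop :=
  exists s, series_converges S (fun i => star (c i) * c i) s.

Definition std_e (R : realType) (A : algType R[i]) (i : nat) : nat -> A :=
  fun j => if j == i then 1 else 0.

Definition is_synthesis_op (R : realType) (A : algType R[i]) (star : A -> A)
    (S : (A -> R) -> Prop) (X : lmodType A) (ip : X -> X -> A)
    (xi : nat -> X) (L : (nat -> A) -> X) : Prop :=
  forall c, in_HA star S c ->
    series_converges (hm_seminorms S ip) (fun i => c i *: xi i) (L c).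

(* Lstar : X -> H_A is the adjoint of L : H_A -> X, for the inner product
   <(a_i),(b_i)> = \sum_i a_i b_i^* on H_A *)
Definition is_adjoint_HA (R : realType) (A : algType R[i]) (star : A -> A)
    (S : (A -> R) -> Prop) (X : lmodType A) (ip : X -> X -> A)
    (L : (nat -> A) -> X) (Lstar : X -> nat -> A) : Prop :=
  forall x, in_HA star S (Lstar x) /\
  forall c, in_HA star S c ->
    series_converges S (fun i => c i * star (Lstar x i)) (ip (L c) x).

Definition is_tight_K_frame (R : realType) (A : algType R[i])
    (S : (A -> R) -> Prop) (X : lmodType A) (ip : X -> X -> A)
    (Kstar : X -> X) (alpha : A) (xi : nat -> X) : Prop :=
  forall x, series_converges S (fun i => ip x (xi i) * ip (xi i) x)
                              (alpha * ip (Kstar x) (Kstar x)).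

Definition is_Parseval_K_frame (R : realType) (A : algType R[i])
    (S : (A -> R) -> Prop) (X : lmodType A) (ip : X -> X -> A)
    (Kstar : X -> X) (xi : nat -> X) : Prop :=
  forall x, series_converges S (fun i => ip x (xi i) * ip (xi i) x)
                              (ip (Kstar x) (Kstar x)).

(* Main.v *)
Require Import Defs.
From HB Require Import structures.
From mathcomp Require Import all_boot all_order all_algebra.
From mathcomp Require Import complex.
From mathcomp Require Import reals.
Import Order.TTheory GRing.Theory Num.Theory.
Local Open Scope ring_scope.

Set Implicit Arguments.
Section Aux.
Variables (R : realType) (A : algType R[i]) (star : A -> A) (S : (A -> R) -> Prop).
Hypothesis hA : is_pro_C_star_algebra star S.

Lemma star0 : star 0 = 0.
Proof.
have h := star_add hA 0 0; rewrite addr0 in h.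
by apply: (addIr (star 0)); rewrite add0r -h.
Qed.

Lemma p0 p : S p -> p 0 = 0.
Proof.
move=> Sp; have h := csn_homog (seminorms_cstar hA Sp) 0 0.
rewrite scale0r in h; rewrite h.
rewrite /Normc.normc /=.
by rewrite expr0n addr0 sqrtr0 mul0r.
Qed.

Lemma pstar_le p a : S p -> p (star a) <= p a.
Proof.
move=> Sp; have hp := seminorms_cstar hA Sp.
have h := csn_cstar hp (star a); rewrite (star_invol hA) in h.
have h2 := csn_submult hp a (star a).
rewrite h expr2 in h2.
have [z|pos] := eqVneq (p (star a)) 0; first by rewrite z (csn_ge0 hp).
have gt : 0 < p (star a) by rewrite lt_def pos (csn_ge0 hp).
by rewrite -(ler_pM2r gt).
Qed.

Lemma sum_single (g : nat -> A) i n : (forall j, j != i -> g j = 0) ->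
  \sum_(j < n) g j = if (i < n)%N then g i else 0.
Proof.
move=> hg; elim: n => [|n IH]; first by rewrite big_ord0.
rewrite big_ord_recr /= IH.
case: (ltngtP i n) => hin.
- rewrite (hg n); last by rewrite gtn_eqF.
  by rewrite addr0 ltnS ltnW.
- rewrite (hg n); last by rewrite ltn_eqF.
  by rewrite addr0 ltnS leqNgt hin.
- by rewrite hin ltnSn add0r.
Qed.

Lemma conv_const (u : nat -> A) s c N0 :
  (forall n, (N0 <= n)%N -> \sum_(i < n) u i = c) -> series_converges S u s -> s = c.
Proof.
move=> hc hs; apply/eqP; rewrite eq_sym -subr_eq0; apply/eqP.
apply: (pro_hausdorff hA) => p Sp.
apply/le_anti; rewrite (csn_ge0 (seminorms_cstar hA Sp)) andbT.
rewrite leNgt; apply/negP => hr.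
have [N hN] := hs p Sp _ hr.
have := hN (maxn N N0) (leq_maxl _ _).
by rewrite hc ?leq_maxr // ltxx.
Qed.

Lemma conv_ext (u v : nat -> A) s t : (forall i, u i = v i) -> s = t ->
  series_converges S u s -> series_converges S v t.
Proof.
move=> huv <- hs p Sp e he; have [N hN] := hs p Sp e he; exists N => n hn.
by rewrite (eq_bigr (fun i : 'I_n => u i)) => [|i _]; [exact: hN | rewrite huv].
Qed.

Lemma conv_add (u v : nat -> A) s t :
  series_converges S u s -> series_converges S v t ->
  series_converges S (fun i => u i + v i) (s + t).
Proof.
move=> hu hv p Sp e he.
have he2 : 0 < e / 2 by rewrite divr_gt0.
have [N1 h1] := hu p Sp _ he2; have [N2 h2] := hv p Sp _ he2.
exists (maxn N1 N2) => n hn.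
rewrite big_split /=.
have -> : \sum_(i < n) u i + \sum_(i < n) v i - (s + t) =
  (\sum_(i < n) u i - s) + (\sum_(i < n) v i - t) by rewrite opprD addrACA.
apply: le_lt_trans (csn_triangle (seminorms_cstar hA Sp) _ _) _.
rewrite (splitr e) ltrD //; [apply: h1 | apply: h2];
  by apply: leq_trans hn; rewrite ?leq_maxr ?leq_maxl.
Qed.

Lemma conv_star (u : nat -> A) s :
  series_converges S u s -> series_converges S (fun i => star (u i)) (star s).
Proof.
move=> hu p Sp e he; have [N hN] := hu p Sp e he; exists N => n hn.
have -> : \sum_(i < n) star (u i) - star s = star (\sum_(i < n) u i - s).
  have sN : forall a, star (- a) = - star a.
    move=> a; apply/eqP; rewrite -subr_eq0 opprK -(star_add hA) addNr star0 //.
  rewrite (star_add hA) sN; congr (_ - _).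
  elim: n {hn} => [|n IH]; first by rewrite !big_ord0 star0.
  by rewrite !big_ord_recr /= (star_add hA) IH.
by apply: le_lt_trans (@pstar_le p _ Sp) (hN n hn).
Qed.

End Aux.
Unset Implicit Arguments.

Theorem theorem5p5 (R : realType) (A : algType R[i]) (star : A -> A)
  (S : (A -> R) -> Prop) (X : lmodType A) (ip : X -> X -> A)
  (K Kstar : X -> X) (xi eta : nat -> X)
  (L1 L2 : (nat -> A) -> X) (L1star L2star : X -> nat -> A) :
  is_pro_C_star_algebra star S ->
  is_hilbert_module star S ip ->
  is_adjointable_hom S ip K Kstar ->
  is_Parseval_K_frame S ip Kstar xi ->
  is_Parseval_K_frame S ip Kstar eta ->
  is_synthesis_op star S ip xi L1 ->
  is_synthesis_op star S ip eta L2 ->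
  is_adjoint_HA star S ip L1 L1star ->
  is_adjoint_HA star S ip L2 L2star ->
  (forall i, L1 (std_e A i) = xi i) ->
  (forall i, L2 (std_e A i) = eta i) ->
  (forall x, L1 (L2star x) = 0) ->
  is_tight_K_frame S ip Kstar 2 (fun i => xi i + eta i).
Proof.
move=> hA hX _ Fxi Feta _ _ adj1 adj2 e1 e2 L12 x.
have ipD : forall y z w, ip (y + z) w = ip y w + ip z w.
  by move=> y z w; have := ip_linear hX 1 y z w; rewrite scale1r mul1r.
have ipD2 : forall y z w, ip w (y + z) = ip w y + ip w z.
  by move=> y z w; rewrite !(ip_star hX _ w) ipD (star_add hA).
have ip0 : forall w, ip 0 w = 0.
  move=> w; have h := ipD 0 0 w; rewrite addr0 in h.
  by apply: (addIr (ip 0 w)); rewrite add0r -h.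
have eHA : forall i, in_HA star S (std_e A i).
  move=> i; exists (star 1 * 1) => p Sp e he; exists i.+1 => n hn.
  rewrite (@sum_single _ _ (fun j => star (std_e A i j) * std_e A i j) i).
    by rewrite (leq_trans (ltnSn i) hn) /std_e eqxx subrr (@p0 _ _ _ _ hA p Sp).
  by move=> j /negbTE hj; rewrite /std_e hj mulr0.
have Lst : forall (L : (nat -> A) -> X) Lstar (z : nat -> X),
    is_adjoint_HA star S ip L Lstar -> (forall i, L (std_e A i) = z i) ->
    forall i, star (Lstar x i) = ip (z i) x.
  move=> L Lstar z hadj hz i.
  have [_ h] := hadj x; have := h _ (eHA i); rewrite hz => hc.
  symmetry; apply: (@conv_const _ _ _ _ hA _ _ _ i.+1 _ hc) => n hn.
  rewrite (@sum_single _ _ (fun j => std_e A i j * star (Lstar x j)) i n).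
    by rewrite (leq_trans (ltnSn i) hn) /std_e eqxx mul1r.
  by move=> j /negbTE hj; rewrite /std_e hj mul0r.
have s1 := Lst _ _ _ adj1 e1; have s2 := Lst _ _ _ adj2 e2.
have hd : series_converges S (fun i => ip x (eta i) * ip (xi i) x) 0.
  have [_ h] := adj1 x; have := h _ (proj1 (adj2 x)).
  rewrite L12 ip0; apply: conv_ext => // i.
  by rewrite s1 (ip_star hX (eta i) x) -s2 (star_invol hA).
have hc := conv_star hA hd; rewrite (star0 hA) in hc.
have Fx := Fxi x; have Fe := Feta x.
have := conv_add hA (conv_add hA (conv_add hA Fx hc) hd) Fe.
apply: conv_ext => [i|].
  rewrite (star_mul hA) -(ip_star hX (xi i) x) -(ip_star hX x (eta i)).
  by rewrite ipD2 ipD !mulrDl !mulrDr !addrA.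
by rewrite !addr0 mulr2n mulrDl mul1r.
Qed.
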